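(* Let $q$ be a self-join-free Boolean conjunctive query and let $C$ be an elementary cycle in the M-graph of $q$ (identified with its set of atoms). Let $\mathbf{db}$ be a database and let $\mathcal{S}$ be a strong component of the $\hookrightarrow_C$-graph of $\mathbf{db}$. If some fact of $\mathcal{S}$ belongs to the maximal garbage set for $C$ in $\mathbf{db}$, then every fact of $\mathcal{S}$ belongs to the maximal garbage set for $C$ in $\mathbf{db}$.
   Context: Every relation name has a signature $[n,k]$ ($1\le k\le n$; primary-key positions $1,\dots,k$) and a mode in $\{\mathsf{c},\mathsf{i}\}$. For an atom $F$, $\mathrm{key}(F)$ = variables at primary-key positions, $\mathrm{vars}(F)$ = all its variables. Facts are variable-free atoms; key-equal facts share relation name and primary-key values. A database is a finite set of facts with no two distinct key-equal facts of mode $\mathsf{c}$, all of whose relation names occur in $q$; the block of $A$ is the set of facts of $\mathbf{db}$ key-equal to $A$; a repair is a maximal subset without two distinct key-equal facts. A self-join-free Boolean conjunctive query is a finite set of atoms with distinct relation names; $\mathrm{atom}(A)$ is the atom of $q$ with the relation name of fact $A$. $\mathcal{K}(p)=\{\mathrm{key}(F)\to\mathrm{vars}(F)\mid F\in p\}$; $q^{\mathsf{c}}$ = atoms of mode $\mathsf{c}$. M-graph of $q$: vertices atoms of $q$, edge $F\to G$ ($F\ne G$) iff $\mathcal{K}(q^{\mathsf{c}})\models\mathrm{vars}(F)\to\mathrm{key}(G)$. $\hookrightarrow$-graph: vertices facts of $\mathbf{db}$, edge $A\hookrightarrow B$ iff there are a valuation $\theta$ of the variables of $q$ and an M-graph edge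 $F\to G$ with $\theta(q)\subseteq\mathbf{db}$, $A=\theta(F)$, $B$ key-equal to $\theta(G)$. The $\hookrightarrow_C$-graph: vertices the facts $A$ with $\mathrm{atom}(A)$ in $C$, edge $A\hookrightarrow_C B$ iff $A\hookrightarrow B$ and $C$ has an edge from $\mathrm{atom}(A)$ to $\mathrm{atom}(B)$. A subset $\mathbf{o}\subseteq\mathbf{db}$ is a garbage set for $q_0\subseteq q$ in $\mathbf{db}$ if (1) for every $A\in\mathbf{o}$, $\mathrm{atom}(A)\in q_0$ and the block of $A$ is included in $\mathbf{o}$; and (2) there is a repair $\mathbf{r}$ of $\mathbf{o}$ such that for every valuation $\theta$ of the variables of $q$, if $\theta(q)\subseteq(\mathbf{db}\setminus\mathbf{o})\cup\mathbf{r}$ then $\theta(q_0)\cap\mathbf{r}=\emptyset$. Garbage sets are closed under union; the maximal garbage set is the largest one. *)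

(* Defs.v *)
From Stdlib Require Import Relation_Operators.
From mathcomp Require Import all_boot.
From Stdlib Require List.
Set Implicit Arguments. Unset Strict Implicit. Unset Printing Implicit Defensive.

(* A schema: every relation name R has signature [arity R, keylen R]
   (primary-key positions 1..keylen R) and a mode (cmode R = true means c). *)
Record schema (Rel : eqType) := Schema {
  arity : Rel -> nat;
  keylen : Rel -> nat;
  cmode : Rel -> bool }.

Section CQA.
Variables (Rel V D : eqType).
(* V: variables, D: constants *)

Definition term := (V + D)%type.
Definition atom := (Rel * seq term)%type.
Definition fact := (Rel * seq D)%type.

Variable sch : schema Rel.

Definition wf_schema := forall R, 0 < keylen sch R <= arity sch R.

Definition vars_of (ts : seq term) : seq V :=
  pmap (fun t => if t is inl x then Some x else None) ts.

Definition key (F : atom) : seq V := vars_of (take (keylen sch F.1) F.2).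
Definition vars (F : atom) : seq V := vars_of F.2.

Definition key_equal (A B : fact) : bool :=
  (A.1 == B.1) && (take (keylen sch A.1) A.2 == take (keylen sch B.1) B.2).

Definition sjf_query (q : seq atom) : Prop :=
  uniq (map fst q) /\ forall F, F \in q -> size F.2 = arity sch F.1.

Definition qc (p : seq atom) : seq atom := filter (fun F => cmode sch F.1) p.

Definition fd := (seq V * seq V)%type.
Definition Kset (p : seq atom) : seq fd := map (fun F => (key F, vars F)) p.

Definition agree (t1 t2 : V -> nat) (X : seq V) := forall x, x \in X -> t1 x = t2 x.
Definition fd_sat (r : seq (V -> nat)) (f : fd) :=
  forall t1 t2, List.In t1 r -> List.In t2 r -> agree t1 t2 f.1 -> agree t1 t2 f.2.
(* Sigma |= X -> Y : every relation (over an infinite domain) satisfying Sigma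
   satisfies X -> Y *)
Definition fd_implies (Sigma : seq fd) (X Y : seq V) :=
  forall r : seq (V -> nat), (forall f, f \in Sigma -> fd_sat r f) -> fd_sat r (X, Y).

Definition medge (q : seq atom) (F G : atom) : Prop :=
  [/\ F \in q, G \in q, F != G & fd_implies (Kset (qc q)) (vars F) (key G)].

Definition inst (theta : V -> D) (F : atom) : fact :=
  (F.1, map (fun t => match t with inl x => theta x | inr c => c end) F.2).
Definition sat_in (theta : V -> D) (q : seq atom) (P : fact -> Prop) :=
  forall F, F \in q -> P (inst theta F).

Definition is_db (q : seq atom) (db : seq fact) : Prop :=
  (forall A, A \in db -> size A.2 = arity sch A.1 /\ A.1 \in map fst q) /\
  (forall A B, A \in db -> B \in db -> cmode sch A.1 -> key_equal A B -> A = B).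

Definition atom_is (q : seq atom) (A : fact) (F : atom) := F \in q /\ F.1 = A.1.

Definition hook (q : seq atom) (db : seq fact) (A B : fact) : Prop :=
  A \in db /\ B \in db /\
  exists theta F G, sat_in theta q (fun X => X \in db) /\ medge q F G /\
    A = inst theta F /\ key_equal B (inst theta G).

(* elementary cycle of the M-graph, given as a duplicate-free cyclic list *)
Definition elem_cycle (q : seq atom) (C : seq atom) : Prop :=
  [/\ C != [::], uniq C & forall F, F \in C -> medge q F (next C F)].

Definition cyc_edge (C : seq atom) (F G : atom) := F \in C /\ next C F = G.

Definition cvertex (q C : seq atom) (db : seq fact) (A : fact) :=
  A \in db /\ exists F, atom_is q A F /\ F \in C.

Definition cedge (q C : seq atom) (db : seq fact) (A B : fact) : Prop :=
  cvertex q C db A /\ cvertex q C db B /\ hook q db A B /\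
  exists F G, atom_is q A F /\ atom_is q B G /\ cyc_edge C F G.

Definition creach q C db := clos_refl_trans fact (cedge q C db).

Definition strong_component (q C : seq atom) (db : seq fact) (S : fact -> Prop) :=
  [/\ exists A, S A,
      forall A, S A -> cvertex q C db A,
      forall A B, S A -> S B -> creach q C db A B &
      forall A B, S A -> cvertex q C db B -> creach q C db A B ->
                  creach q C db B A -> S B].

Definition subset (P Q : fact -> Prop) := forall x, P x -> Q x.
Definition consistent (r : fact -> Prop) :=
  forall A B, r A -> r B -> key_equal A B -> A = B.
Definition repair (o r : fact -> Prop) :=
  [/\ subset r o, consistent r &
      forall r', subset r r' -> subset r' o -> consistent r' -> subset r' r].

Definition garbage (q : seq atom) (db : seq fact) (q0 : seq atom) (o : fact -> Prop) :=
  [/\ subset o (fun A => A \in db),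
      forall A, o A ->
        (exists F, atom_is q A F /\ F \in q0) /\
        (forall B, B \in db -> key_equal A B -> o B) &
      exists r, repair o r /\
        forall theta, sat_in theta q (fun A => (A \in db /\ ~ o A) \/ r A) ->
          forall F, F \in q0 -> ~ r (inst theta F)].

Definition max_garbage q db q0 (o : fact -> Prop) :=
  garbage q db q0 o /\ forall o', garbage q db q0 o' -> subset o' o.

End CQA.

(* Main.v *)
Require Import Defs.
From mathcomp Require Import all_boot.
From Stdlib Require Import Classical Relation_Operators.
Set Implicit Arguments. Unset Strict Implicit.

Section Aux.
Variables (Rel V D : eqType) (sch : schema Rel).

Definition ev (th : V -> D) (t : term V D) : D :=
  match t with inl x => th x | inr c => c end.

Lemma map_ev_eq th th' (s : seq (term V D)) :
  (forall x, x \in vars_of s -> th x = th' x) -> map (ev th) s = map (ev th') s.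
Proof.
elim: s => [|t s IH] //= H.
case: t H => [x|c] H /=.
- rewrite (H x) ?inE ?eqxx // IH // => y Hy; apply: H; by rewrite inE Hy orbT.
- by rewrite IH.
Qed.

Lemma map_ev_agree th th' (s : seq (term V D)) :
  map (ev th) s = map (ev th') s -> forall x, x \in vars_of s -> th x = th' x.
Proof.
elim: s => [|t s IH] //= H x.
case: t H => [y|c] /= [] E1 E2.
- rewrite inE => /orP [/eqP -> //|]; exact: IH.
- exact: IH.
Qed.

Lemma inst_ev th (F : atom Rel V D) : inst th F = (F.1, map (ev th) F.2).
Proof. by []. Qed.

Lemma key_equal_refl (A : fact Rel D) : key_equal sch A A.
Proof. by rewrite /key_equal !eqxx. Qed.

Lemma key_equal_sym (A B : fact Rel D) : key_equal sch A B -> key_equal sch B A.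
Proof. by rewrite /key_equal => /andP [/eqP -> /eqP ->]; rewrite !eqxx. Qed.

Lemma key_equal_trans (A B E : fact Rel D) :
  key_equal sch A B -> key_equal sch B E -> key_equal sch A E.
Proof.
rewrite /key_equal => /andP [/eqP -> /eqP ->] /andP [/eqP -> /eqP ->].
by rewrite !eqxx.
Qed.

Lemma key_equal_fst (A B : fact Rel D) : key_equal sch A B -> A.1 = B.1.
Proof. by case/andP => /eqP. Qed.

Lemma inst_key_equal th th' (H : atom Rel V D) :
  (forall x, x \in key sch H -> th x = th' x) ->
  key_equal sch (inst th H) (inst th' H).
Proof.
move=> Hk; rewrite /key_equal /= eqxx /=.
rewrite -!map_take.
by rewrite (@map_ev_eq th th') // .
Qed.

Lemma inst_agree th th' (H : atom Rel V D) :
  inst th H = inst th' H -> forall x, x \in vars H -> th x = th' x.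
Proof.
rewrite !inst_ev => [[E]]; exact: map_ev_agree.
Qed.

Lemma uniq_map_eq (T1 T2 : eqType) (f : T1 -> T2) (s : seq T1) x y :
  uniq (map f s) -> x \in s -> y \in s -> f x = f y -> x = y.
Proof.
elim: s => [|a s IH] //= /andP [Ha Hu].
rewrite !inE => /orP [/eqP ->|Hx] /orP [/eqP ->|Hy] E //.
- by move: Ha; rewrite E (map_f f Hy).
- by move: Ha; rewrite -E (map_f f Hx).
- exact: IH.
Qed.

End Aux.

Lemma back (Rel V D : eqType) (sch : schema Rel)
  (q C : seq (atom Rel V D)) (db : seq (fact Rel D))
  (M : fact Rel D -> Prop) :
  sjf_query sch q -> elem_cycle sch q C -> is_db sch q db ->
  max_garbage sch q db C M ->
  forall A B, cedge sch q C db A B -> M B -> M A.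
Proof.
move=> [Huq _] [_ _ Hcyc] [_ Hdb] [[Msub Mblk [r [[rsub rcons rmax] Hr]]] Mmax].
move=> A B [[Adb [FA [[FAq FA1] FAC]]] [[Bdb [GB [[GBq GB1] GBC]]] [hk _]]].
move=> MB.
have Cq : forall F, F \in C -> F \in q by move=> F /Hcyc [].
have sj : forall F G, F \in q -> G \in q -> F.1 = G.1 -> F = G.
  by move=> F G HF HG E; exact: (@uniq_map_eq _ _ fst q F G Huq HF HG E).
case: (classic (M A)) => // nMA.
pose o' := fun x => M x \/ (x \in db /\ key_equal sch A x).
suff: garbage sch q db C o' by move=> /Mmax; apply; right; split => //; apply: key_equal_refl.
have rM : forall x, r x -> M x by [].
split.
- by move=> x [/Msub|[]].
- move=> x [Mx|[xdb Ax]].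
  + have [H1 H2] := Mblk x Mx; split => // y ydb xy; left; exact: H2 ydb xy.
  + split.
    * exists FA; split => //; split => //; by rewrite FA1 (key_equal_fst Ax).
    * move=> y ydb xy; right; split => //; exact: key_equal_trans Ax xy.
pose r' := fun x => r x \/ x = A.
exists r'; split; first split.
- move=> x [/rM Mx|->]; [by left|right; split => //; apply: key_equal_refl].
- move=> x y [rx|->] [ry|->] xy.
  + exact: rcons.
  + exfalso; apply: nMA; have [_ H2] := Mblk x (rM x rx); exact: H2 Adb xy.
  + exfalso; apply: nMA; have [_ H2] := Mblk y (rM y ry).
    exact: H2 Adb (key_equal_sym xy).
  + by [].
- move=> r'' sr' so' cr'' x rx.
  case: (so' x rx) => [Mx|[xdb Ax]].
  + left; apply: (rmax (fun y => r'' y /\ M y)) => //.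
    * move=> y ry; split; [apply: sr'; by left|exact: rM].
    * by move=> y [].
    * move=> y z [ry _] [rz _]; exact: cr''.
  + right; symmetry; apply: cr'' => //; apply: sr'; by right.
- move=> th Hth H HC rH.
  have Hth0 : sat_in th q (fun X => (X \in db /\ ~ M X) \/ r X).
    move=> F Fq; case: (Hth F Fq) => [[Xdb nX]|[rX|EX]].
    + left; split => //; move=> MX; apply: nX; by left.
    + by right.
    + left; by rewrite EX.
  have ndb : forall F, F \in q -> inst th F \in db.
    move=> F Fq; case: (Hth F Fq) => [[]//|[/rM /Msub //|->//]].
  case: rH => [rH|EH]; first exact: (Hr th Hth0 H HC rH).
  case: hk => _ [_ [th0 [F0 [G0 [Hs0 [[F0q G0q F0G0 Himp] [EA KB]]]]]]].
  have HF0 : H = F0.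
    apply: sj => //; first exact: Cq.
    by rewrite -[H.1]/((inst th H).1) EH EA.
  subst H.
  have ag : forall x, x \in vars F0 -> th x = th0 x.
    apply: inst_agree; by rewrite EH.
  pose t1 := fun _ : V => 0.
  pose t2 := fun x : V => if th x == th0 x then 0 else 1.
  have agE : forall X, agree t1 t2 X <-> (forall x, x \in X -> th x = th0 x).
    move=> X; split.
    - move=> Hag x Hx; move: (Hag x Hx); rewrite /t1 /t2.
      by case: eqP.
    - move=> Hag x Hx; by rewrite /t1 /t2 (Hag x Hx) eqxx.
  have agS : forall (t t' : V -> nat) X, agree t t' X -> agree t' t X.
    by move=> t t' X Hag x Hx; rewrite Hag.
  have agR : forall (t : V -> nat) X, agree t t X by [].
  have Hfd : forall f, f \in Kset sch (qc sch q) -> fd_sat [:: t1; t2] f.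
    move=> f /mapP [H]; rewrite mem_filter => /andP [cH Hq] ->.
    have key_eq : (forall x, x \in key sch H -> th x = th0 x) ->
                  forall x, x \in vars H -> th x = th0 x.
      move=> Hk; apply: inst_agree.
      apply: (Hdb _ _ (ndb H Hq) (Hs0 H Hq)) => //.
      exact: inst_key_equal.
    move=> u u' /= Hu Hu'.
    case: Hu => [<-|[<-|[]]]; case: Hu' => [<-|[<-|[]]] //=.
    + move=> /agE /key_eq /agE //.
    + move=> /agS /agE /key_eq /agE; exact: agS.
  have Hk : agree t1 t2 (key sch G0).
    apply: (Himp _ Hfd t1 t2); [by left|by right; left|by apply/agE].
  have KG : key_equal sch B (inst th G0).
    apply: key_equal_trans KB (key_equal_sym _); apply: inst_key_equal.
    by apply/agE.
  have MG : M (inst th G0).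
    have [_ H2] := Mblk B MB; exact: H2 (ndb G0 G0q) KG.
  case: (Hth0 G0 G0q) => [[_ //]|rG].
  apply: (Hr th Hth0 G0 _ rG).
  have -> : G0 = GB; last by [].
  apply: sj => //.
  by rewrite GB1 (key_equal_fst KG).
Qed.

Theorem corollary20 (Rel V D : eqType) (sch : schema Rel)
  (q C : seq (atom Rel V D)) (db : seq (fact Rel D))
  (S M : fact Rel D -> Prop) :
  wf_schema sch -> sjf_query sch q -> elem_cycle sch q C -> is_db sch q db ->
  strong_component sch q C db S -> max_garbage sch q db C M ->
  (exists A, S A /\ M A) -> forall A, S A -> M A.
Proof.
move=> _ Hq HC Hdb [_ _ Hreach _] Hm [A0 [SA0 MA0]] A SA.
move: MA0; elim: (Hreach A A0 SA SA0) => [x y Hxy My|x //|x y z _ IH1 _ IH2 Mz].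
- exact: back Hq HC Hdb Hm x y Hxy My.
- exact: IH1 (IH2 Mz).
Qed.
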